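(* For every $\delta\in\mathcal{T}_D$ and $\kappa\in\mathcal{T}_C$: (1) $[\![\delta]\!]\subseteq\mathcal{SN}$ and $[\![\kappa]\!]\subseteq\mathcal{SN}^*$; (2) for every term variable $x$ and stack $\vec N$, if $x\vec N\in\mathcal{SN}$ then $x\vec N\in[\![\delta]\!]$; (3) for every $n\ge|\kappa|$ and term variables $x_1,\dots,x_n$, the stack $x_1:\cdots:x_n$ belongs to $[\![\kappa]\!]$.
   Context: $\lambda\mu$-calculus (Parigot). Terms $M,N ::= x \mid \lambda x.M \mid MN \mid \mu\alpha.[\beta]M$ over disjoint denumerable sets of term variables and names ($\lambda$ binds $x$, $\mu$ binds $\alpha$). $M[N/x]$ is capture-avoiding substitution; structural substitution $T[\alpha\Leftarrow L]$ replaces every subterm $[\alpha]N$ of $T$ by $[\alpha]N'L$ where $N'=N[\alpha\Leftarrow L]$ (recursively), commuting with all other constructors. Reduction is the compatible closure of $(\lambda x.M)N\to M[N/x]$ and $(\mu\beta.[\gamma]M)N\to\mu\beta.(([\gamma]M)[\beta\Leftarrow N])$. $\mathcal{SN}$ is the set of terms with no infinite reduction sequence. A stack is a finite (possibly empty) sequence $\vec L=L_1:\cdots:L_k$ of terms, and $M\vec L$ denotes $ML_1\cdots L_k$; $\mathcal{SN}^*$ is the set of stacks all of whose elements are in $\mathcal{SN}$. Types: with constant $\nu$ and symbol $\omega$ (not itself a type), $\mathcal{T}_D:\ \delta ::= \nu \mid \omega\to\nu \mid \kappa\to\nu \mid \delta\wedge\delta$; $\mathcal{T}_C:\ \kappa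 ::= \delta\times\omega \mid \delta\times\kappa \mid \kappa\wedge\kappa$. Interpretation: $[\![\nu]\!]=[\![\omega\to\nu]\!]=\mathcal{SN}$; $[\![\kappa\to\nu]\!]=\{M\mid \forall\vec L\in[\![\kappa]\!].\ M\vec L\in\mathcal{SN}\}$; $[\![\delta\times\omega]\!]=\{N:\vec L\mid N\in[\![\delta]\!],\vec L\in\mathcal{SN}^*\}$; $[\![\delta\times\kappa]\!]=\{N:\vec L\mid N\in[\![\delta]\!],\vec L\in[\![\kappa]\!]\}$; $[\![\sigma\wedge\tau]\!]=[\![\sigma]\!]\cap[\![\tau]\!]$. Length: $|\delta\times\omega|=1$, $|\delta\times\kappa|=1+|\kappa|$, $|\kappa_1\wedge\kappa_2|=\max(|\kappa_1|,|\kappa_2|)$. *)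

(* Defs.v *)
(* Lambda-mu calculus with de Bruijn indices
   (two independent index spaces: term variables and names). *)
From Stdlib Require Import Arith List.
Import ListNotations.

(* Tm_Var x       : term variable x
   Tm_Lam M       : \x.M            (binds term index 0 in M)
   Tm_App M N     : M N
   Tm_Mu b M      : mu a.[b]M       (binds name index 0 in the command [b]M;
                                     b is a name index in the extended context) *)
Inductive term : Type :=
| Tm_Var : nat -> term
| Tm_Lam : term -> term
| Tm_App : term -> term -> term
| Tm_Mu  : nat -> term -> term.

Fixpoint lift_t (k : nat) (t : term) : term :=
  match t with
  | Tm_Var x => if k <=? x then Tm_Var (S x) else Tm_Var x
  | Tm_Lam M => Tm_Lam (lift_t (S k) M)
  | Tm_App M N => Tm_App (lift_t k M) (lift_t k N)
  | Tm_Mu b M => Tm_Mu b (lift_t k M)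
  end.

Fixpoint lift_n (k : nat) (t : term) : term :=
  match t with
  | Tm_Var x => Tm_Var x
  | Tm_Lam M => Tm_Lam (lift_n k M)
  | Tm_App M N => Tm_App (lift_n k M) (lift_n k N)
  | Tm_Mu b M => Tm_Mu (if S k <=? b then S b else b) (lift_n (S k) M)
  end.

(* capture-avoiding substitution M[N/k] removing variable k
   (N is already expressed in the context of the binder position) *)
Fixpoint subst (k : nat) (N : term) (t : term) : term :=
  match t with
  | Tm_Var x =>
      if x =? k then N
      else if k <? x then Tm_Var (pred x) else Tm_Var x
  | Tm_Lam M => Tm_Lam (subst (S k) (lift_t 0 N) M)
  | Tm_App M P => Tm_App (subst k N M) (subst k N P)
  | Tm_Mu b M => Tm_Mu b (subst k (lift_n 0 N) M)
  end.

(* structural substitution T[a <= N]: every [a]P becomes [a](P' N) *)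
Fixpoint ssub (a : nat) (N : term) (t : term) : term :=
  match t with
  | Tm_Var x => Tm_Var x
  | Tm_Lam M => Tm_Lam (ssub a (lift_t 0 N) M)
  | Tm_App M P => Tm_App (ssub a N M) (ssub a N P)
  | Tm_Mu b M =>
      let N' := lift_n 0 N in
      let M' := ssub (S a) N' M in
      Tm_Mu b (if b =? S a then Tm_App M' N' else M')
  end.

(* one-step reduction: compatible closure of beta and structural (mu) rule.
   (mu b.[g]M) N -> mu b.(([g]M)[b <= N]); here b is name index 0 inside
   the body, N is shifted past the mu binder. *)
Inductive red : term -> term -> Prop :=
| red_beta : forall M N, red (Tm_App (Tm_Lam M) N) (subst 0 N M)
| red_mu : forall g M N,
    red (Tm_App (Tm_Mu g M) N)
        (let N' := lift_n 0 N in
         let M' := ssub 0 N' M in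
         Tm_Mu g (if g =? 0 then Tm_App M' N' else M'))
| red_lam : forall M M', red M M' -> red (Tm_Lam M) (Tm_Lam M')
| red_appl : forall M M' N, red M M' -> red (Tm_App M N) (Tm_App M' N)
| red_appr : forall M N N', red N N' -> red (Tm_App M N) (Tm_App M N')
| red_mu_body : forall b M M', red M M' -> red (Tm_Mu b M) (Tm_Mu b M').

Definition SN (t : term) : Prop := Acc (fun u v => red v u) t.

Definition stack := list term.
Definition app_stack (M : term) (Ls : stack) : term := fold_left Tm_App Ls M.
Definition SNstar (Ls : stack) : Prop := Forall SN Ls.

(* types: T_D (dtype) and T_C (ctype) *)
Inductive dtype : Type :=
| D_nu : dtype
| D_omega_arr : dtype                  (* omega -> nu *)
| D_arr : ctype -> dtype               (* kappa -> nu *)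
| D_and : dtype -> dtype -> dtype
with ctype : Type :=
| C_omega : dtype -> ctype             (* delta x omega *)
| C_prod : dtype -> ctype -> ctype     (* delta x kappa *)
| C_and : ctype -> ctype -> ctype.

Fixpoint interp_d (d : dtype) (M : term) {struct d} : Prop :=
  match d with
  | D_nu => SN M
  | D_omega_arr => SN M
  | D_arr k => forall Ls, interp_c k Ls -> SN (app_stack M Ls)
  | D_and d1 d2 => interp_d d1 M /\ interp_d d2 M
  end
with interp_c (k : ctype) (Ls : stack) {struct k} : Prop :=
  match k with
  | C_omega d => exists N L, Ls = N :: L /\ interp_d d N /\ SNstar L
  | C_prod d k' => exists N L, Ls = N :: L /\ interp_d d N /\ interp_c k' L
  | C_and k1 k2 => interp_c k1 Ls /\ interp_c k2 Ls
  end.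

Fixpoint clen (k : ctype) : nat :=
  match k with
  | C_omega _ => 1
  | C_prod _ k' => S (clen k')
  | C_and k1 k2 => Nat.max (clen k1) (clen k2)
  end.

(* Main.v *)
Require Import Defs.
From Stdlib Require Import Arith List Lia.
Import ListNotations.

Scheme dtype_mut := Induction for dtype Sort Prop
with ctype_mut := Induction for ctype Sort Prop.

Lemma app_stack_snoc M l a : app_stack M (l ++ [a]) = Tm_App (app_stack M l) a.
Proof. unfold app_stack; rewrite fold_left_app; reflexivity. Qed.

Lemma app_stack_cons M a l : app_stack M (a :: l) = app_stack (Tm_App M a) l.
Proof. reflexivity. Qed.

Lemma SN_app_l : forall t, SN t -> forall M N, t = Tm_App M N -> SN M.
Proof.
  intros t H; induction H as [t _ IH]; intros M N ->.
  constructor; intros M' Hr. apply (IH (Tm_App M' N)) with (N := N); [constructor; auto | reflexivity].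
Qed.

Lemma SN_app_r : forall t, SN t -> forall M N, t = Tm_App M N -> SN N.
Proof.
  intros t H; induction H as [t _ IH]; intros M N ->.
  constructor; intros N' Hr. apply (IH (Tm_App M N')) with (M := M); [constructor; auto | reflexivity].
Qed.

Lemma SN_stack_head : forall Ls M, SN (app_stack M Ls) -> SN M.
Proof.
  induction Ls; intros M H; simpl in *; auto.
  apply IHLs in H. eapply SN_app_l; eauto.
Qed.

Lemma SN_stack_args : forall Ls M, SN (app_stack M Ls) -> Forall SN Ls.
Proof.
  induction Ls using rev_ind; intros M H; auto.
  rewrite app_stack_snoc in H. apply Forall_app; split.
  - eapply IHLs. eapply SN_app_l; eauto.
  - constructor; auto. eapply SN_app_r; eauto.
Qed.

Lemma SN_var x : SN (Tm_Var x).
Proof. constructor; intros y H; inversion H. Qed.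

Inductive redl : list term -> list term -> Prop :=
| redl_hd : forall a a' l, red a a' -> redl (a :: l) (a' :: l)
| redl_tl : forall a l l', redl l l' -> redl (a :: l) (a :: l').

Lemma redl_app l l' m : redl l l' -> redl (l ++ m) (l' ++ m).
Proof. induction 1; simpl; constructor; auto. Qed.

Lemma redl_last l a a' : red a a' -> redl (l ++ [a]) (l ++ [a']).
Proof. induction l; simpl; intros; constructor; auto. Qed.

Lemma app_stack_var_notlam x : forall l M, app_stack (Tm_Var x) l <> Tm_Lam M.
Proof.
  induction l using rev_ind; intros M; [discriminate|].
  rewrite app_stack_snoc; discriminate.
Qed.

Lemma app_stack_var_notmu x : forall l b M, app_stack (Tm_Var x) l <> Tm_Mu b M.
Proof.
  induction l using rev_ind; intros b M; [discriminate|].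
  rewrite app_stack_snoc; discriminate.
Qed.

Lemma red_var_stack x : forall l t, red (app_stack (Tm_Var x) l) t ->
  exists l', redl l l' /\ t = app_stack (Tm_Var x) l'.
Proof.
  induction l using rev_ind; intros t Hr.
  - inversion Hr.
  - rewrite app_stack_snoc in Hr.
    remember (app_stack (Tm_Var x) l) as P eqn:HP.
    inversion Hr; subst.
    + exfalso; eapply app_stack_var_notlam; eauto.
    + exfalso; eapply app_stack_var_notmu; eauto.
    + destruct (IHl _ H2) as [l' [Hl ->]].
      exists (l' ++ [x0]); split; [apply redl_app; auto | rewrite app_stack_snoc; auto].
    + exists (l ++ [N']); split; [apply redl_last; auto | rewrite app_stack_snoc; auto].
Qed.

Lemma Acc_redl : forall l, Forall SN l -> Acc (fun u v => redl v u) l.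
Proof.
  induction l as [|h t IHt]; intros HF.
  - constructor; intros y H; inversion H.
  - inversion HF as [|? ? Hh Ht]; subst. specialize (IHt Ht). clear HF Ht.
    revert t IHt. induction Hh as [h _ IHh]. intros t Ht.
    induction Ht as [t Htacc IHt].
    constructor; intros y Hy. inversion Hy; subst.
    + apply IHh; auto. constructor; auto.
    + apply IHt; auto.
Qed.

Lemma SN_var_stack x : forall l, Forall SN l -> SN (app_stack (Tm_Var x) l).
Proof.
  intros l Hl. apply Acc_redl in Hl. induction Hl as [l _ IH].
  constructor; intros t Hr. destruct (red_var_stack _ _ _ Hr) as [l' [Hl' ->]].
  apply IH; auto.
Qed.

Lemma Forall_SN_map_var xs : Forall SN (map Tm_Var xs).
Proof. induction xs; simpl; constructor; auto using SN_var. Qed.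

Definition Pd (d : dtype) : Prop :=
  (forall M, interp_d d M -> SN M) /\
  (forall (x : nat) (Ns : stack),
        SN (app_stack (Tm_Var x) Ns) -> interp_d d (app_stack (Tm_Var x) Ns)).
Definition Pc (k : ctype) : Prop :=
  (forall Ls, interp_c k Ls -> SNstar Ls) /\
  (forall (xs : list nat), clen k <= length xs -> interp_c k (map Tm_Var xs)).

Ltac solve_case :=
  first
  [ split; intros; auto; fail
  | intros k [IH1 IH3]; split;
    [ intros M H; apply (SN_stack_head (map Tm_Var (repeat 0 (clen k)))); apply H;
      apply IH3; rewrite repeat_length; auto
    | intros x Ns H Ls HL; apply IH1 in HL; unfold app_stack; rewrite <- fold_left_app;
      apply SN_var_stack; apply Forall_app; split; [eapply SN_stack_args; eauto | exact HL]]
  | solve [intros d1 [A1 B1] d2 [A2 B2]; split; [intros M [H1 H2]; auto | intros; split; auto]]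
  | intros d [A B]; split;
    [ intros Ls (N & L & -> & HN & HL); constructor; auto
    | intros xs Hl; destruct xs as [|y ys]; simpl in Hl; [lia|];
      exists (Tm_Var y), (map Tm_Var ys); split; [reflexivity|]; split;
      [ apply (B y []); apply SN_var | apply Forall_SN_map_var ]]
  | intros d [A B] k [C D]; split;
    [ intros Ls (N & L & -> & HN & HL); constructor; auto; apply C; auto
    | intros xs Hl; destruct xs as [|y ys]; simpl in Hl; [lia|];
      exists (Tm_Var y), (map Tm_Var ys); split; [reflexivity|]; split;
      [ apply (B y []); apply SN_var | apply D; lia ]]
  | intros k1 [A1 B1] k2 [A2 B2]; split;
    [ intros Ls [H1 H2]; auto | intros xs Hl; split; [apply B1|apply B2]; lia ] ].

Lemma main_mut : (forall d, Pd d) /\ (forall k, Pc k).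
Proof.
  split; [apply (dtype_mut Pd Pc) | apply (ctype_mut Pd Pc)]; unfold Pd, Pc; simpl;
  solve_case.
Qed.

Theorem mainTheorem8 :
  forall (d : dtype) (k : ctype),
    ((forall M, interp_d d M -> SN M) /\ (forall Ls, interp_c k Ls -> SNstar Ls)) /\
    (forall (x : nat) (Ns : stack),
        SN (app_stack (Tm_Var x) Ns) -> interp_d d (app_stack (Tm_Var x) Ns)) /\
    (forall (n : nat) (xs : list nat),
        clen k <= n -> length xs = n -> interp_c k (map Tm_Var xs)).
Proof.
  intros d k. destruct main_mut as [Hd Hc].
  destruct (Hd d) as [A B]; destruct (Hc k) as [C D].
  split; [split; auto | split; auto].
  intros n xs Hn Hl; subst; auto.
Qed.
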